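(* For all integers $v\ge 2$ and $t\ge 2$, $I_t(2,v)=v-1$.
   Context: A $(w,v)$ set system is a pair $(\mathcal{X},\mathcal{B})$ with $|\mathcal{X}|=v$ and $\mathcal{B}\subseteq\binom{\mathcal{X}}{w}$ (the family of all $w$-element subsets of $\mathcal{X}$); elements of $\mathcal{B}$ are blocks. For a $w$-subset $T\subseteq\mathcal{X}$ let $P_t(T)=\{\mathcal{P}\subseteq\mathcal{B}: |\mathcal{P}|\le t,\ T\subseteq\bigcup_{B\in\mathcal{P}}B\}$. The set system is a $t$-IPPS$(w,v)$ if for every $w$-subset $T\subseteq\mathcal{X}$, either $P_t(T)=\emptyset$ or $\bigcap_{\mathcal{P}\in P_t(T)}\mathcal{P}\neq\emptyset$. $I_t(w,v)$ denotes the maximum of $|\mathcal{B}|$ over all $t$-IPPS$(w,v)$. *)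

(* Defs.v *)
From mathcomp Require Import all_boot.
Set Implicit Arguments. Unset Strict Implicit. Unset Printing Implicit Defensive.

Definition set_system (v w : nat) (Bs : {set {set 'I_v}}) : bool :=
  [forall B in Bs, #|B| == w].

Definition Pt (v t : nat) (Bs : {set {set 'I_v}}) (T : {set 'I_v})
  : {set {set {set 'I_v}}} :=
  [set P in powerset Bs | (#|P| <= t) && (T \subset \bigcup_(B in P) B)].

Definition is_IPPS (v t w : nat) (Bs : {set {set 'I_v}}) : bool :=
  set_system w Bs &&
  [forall T : {set 'I_v}, (#|T| == w) ==>
     ((Pt t Bs T == set0) ||
      [exists B : {set 'I_v}, [forall P in Pt t Bs T, B \in P]])].

Definition I_t (t w v : nat) : nat :=
  \max_(Bs : {set {set 'I_v}} | is_IPPS t w Bs) #|Bs|.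

(* Main.v *)
Require Import Defs.
From mathcomp Require Import all_boot.
Set Implicit Arguments. Unset Strict Implicit.

Lemma pair_in_Pt v t (Bs : {set {set 'I_v}}) (x y : 'I_v) e f :
  2 <= t -> e \in Bs -> f \in Bs -> x \in e -> y \in f ->
  [set e; f] \in Pt t Bs [set x; y].
Proof.
move=> ht he hf hx hy; rewrite /Pt inE; apply/andP; split.
  rewrite powersetE; apply/subsetP => z; rewrite !inE => /orP[]/eqP->//.
apply/andP; split.
  by rewrite cards2; apply: leq_trans ht; case: (e != f).
apply/subsetP => z; rewrite !inE => /orP[]/eqP->.
  by apply: (subsetP (bigcup_sup e _)) => //; rewrite !inE eqxx.
by apply: (subsetP (bigcup_sup f _)) => //; rewrite !inE eqxx orbT.
Qed.

Lemma key v t (Bs : {set {set 'I_v}}) (x y : 'I_v) e1 e2 f1 f2 :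
  2 <= t -> is_IPPS t 2 Bs -> x != y ->
  e1 \in Bs -> e2 \in Bs -> f1 \in Bs -> f2 \in Bs ->
  x \in e1 -> x \in e2 -> y \in f1 -> y \in f2 -> e1 != e2 -> f1 != f2 -> False.
Proof.
move=> ht HB hxy he1 he2 hf1 hf2 x1 x2 y1 y2 ne nf.
move/andP: HB => [_ /forallP /(_ [set x; y])].
rewrite cards2 hxy /= => /orP[/eqP|].
  move=> H; have := pair_in_Pt ht he1 hf1 x1 y1; by rewrite H inE.
case/existsP => B /forallP hB.
have h1 := implyP (hB _) (pair_in_Pt ht he1 hf1 x1 y1).
have h2 := implyP (hB _) (pair_in_Pt ht he2 hf2 x2 y2).
have h3 := implyP (hB _) (pair_in_Pt ht he1 hf2 x1 y2).
have h4 := implyP (hB _) (pair_in_Pt ht he2 hf1 x2 y1).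
move: h1 h2 h3 h4; rewrite !inE.
case/orP=>/eqP->; case/orP=>/eqP E2; case/orP=>/eqP E3; case/orP=>/eqP E4;
  subst; first [by rewrite eqxx in ne | by rewrite eqxx in nf].
Qed.

Theorem theorem3 (v t : nat) : 2 <= v -> 2 <= t -> I_t t 2 v = v - 1.
Proof.
case: v => [|[|v]] // _ ht.
set n := v.+2.
apply/eqP; rewrite eqn_leq; apply/andP; split.
- apply/bigmax_leqP => Bs HB.
  pose deg (u : 'I_n) := #|[set B in Bs | u \in B]|.
  pose c := odflt ord0 [pick u | 1 < deg u].
  have Hc : forall u, u != c -> 1 < deg u -> False.
    move=> u uc du; move: uc; rewrite /c; case: pickP => [w dw|/(_ u)]; last by rewrite du.
    move=> /= uw.
    move/card_gt1P: du => [e1 [e2 [he1 he2 ne]]].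
    move/card_gt1P: dw => [f1 [f2 [hf1 hf2 nf]]].
    move: he1 he2 hf1 hf2; rewrite !inE => /andP[a1 b1] /andP[a2 b2] /andP[a3 b3] /andP[a4 b4].
    exact: (key ht HB uw a1 a2 a3 a4 b1 b2 b3 b4 ne nf).
  have Hs : forall B, B \in Bs -> #|B| = 2.
    by move=> B hB; move/andP: HB => [/forallP /(_ B) /implyP /(_ hB) /eqP].
  have Hu : forall B, B \in Bs -> exists u, [/\ u \in B, u != c & deg u = 1].
    move=> B hB; have := Hs B hB; move/eqP/cards2P => [a [b [ab Eb]]].
    have [u [uB uc]] : exists u, u \in B /\ u != c.
      case: (eqVneq a c) => [ac|ac].
        by exists b; rewrite Eb !inE eqxx orbT -ac eq_sym.
      by exists a; rewrite Eb !inE eqxx.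
    exists u; split => //.
    have : 0 < deg u by apply/card_gt0P; exists B; rewrite inE hB uB.
    case: (ltngtP (deg u) 1) => // d1 _; case: (Hc u uc d1).
  pose g (B : {set 'I_n}) := odflt c [pick u | [&& u \in B, u != c & deg u == 1]].
  have Hg : forall B, B \in Bs -> [/\ g B \in B, g B != c & deg (g B) = 1].
    move=> B hB; rewrite /g; case: pickP => [u /and3P[? ? /eqP ?]|H] //=.
    by have [u [a b d]] := Hu B hB; have := H u; rewrite a b d eqxx.
  have inj : {in Bs &, injective g}.
    move=> B1 B2 h1 h2 E.
    have [a1 _ d1] := Hg B1 h1; have [a2 _ _] := Hg B2 h2.
    move/eqP/cards1P: d1 => [B0 E0].
    have : B1 \in [set B in Bs | g B1 \in B] by rewrite inE h1 a1.
    have : B2 \in [set B in Bs | g B1 \in B] by rewrite inE h2 E a2.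
    by rewrite E0 !inE => /eqP-> /eqP->.
  rewrite -(card_in_imset inj); apply: (@leq_trans #|[set~ c]|); last first.
    by rewrite cardsC1 card_ord subn1.
  apply: subset_leq_card; apply/subsetP => u /imsetP [B hB ->].
  by have [_ ? _] := Hg B hB; rewrite !inE.
- pose c : 'I_n := ord0.
  pose Bs := [set [set c; x] | x in [set~ c]].
  apply: (@bigmax_sup _ Bs).
    apply/andP; split.
      apply/forallP => B; apply/implyP => /imsetP [x xc ->].
      by rewrite cards2; rewrite !inE eq_sym in xc; rewrite xc.
    apply/forallP => T; apply/implyP => /cards2P [a [b [ab ET]]].
    apply/orP; right.
    have [u [uT uc]] : exists u, u \in T /\ u != c.
      case: (eqVneq a c) => [ac|ac].
        by exists b; rewrite ET !inE eqxx orbT -ac eq_sym.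
      by exists a; rewrite ET !inE eqxx.
    apply/existsP; exists [set c; u]; apply/forallP => P; apply/implyP.
    rewrite inE powersetE => /andP[PB /andP[_ Tsub]].
    have /bigcupP [B BP uB] := subsetP Tsub u uT.
    have /imsetP [x xc EB] := subsetP PB B BP.
    move: uB; rewrite EB !inE (negbTE uc) /= => /eqP Eu.
    by rewrite Eu -EB.
  rewrite card_in_imset ?cardsC1 ?card_ord ?subn1 //.
  move=> x y; rewrite !inE => xc yc E.
  have : x \in [set c; y] by rewrite -E !inE eqxx orbT.
  by rewrite !inE (negbTE xc) => /eqP.
Qed.
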